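(* Consider graphs of maximum degree $4$ with ports numbered $1,2,3,4$, and the following protocol. For each node $v$ on a fixed shortest path from the source $s$ to the treasure $t$ (of length $D$), other than $t$, the oracle places at $v$ a quantum pebble emitting qubits in state $\psi_i$, where $i$ is the port at $v$ of the next edge of the path and $\psi_1=|0\rangle$, $\psi_2=|1\rangle$, $\psi_3=|+\rangle$, $\psi_4=|-\rangle$ (with $|\pm\rangle=(|0\rangle\pm|1\rangle)/\sqrt2$). At each node the agent measures $n$ emitted qubits in the computational basis $\{|0\rangle,|1\rangle\}$ and $n$ emitted qubits in the sign basis $\{|+\rangle,|-\rangle\}$; if exactly one of the two bases yields the same outcome in all $n$ measurements, the agent takes the port corresponding to that outcome ($0\mapsto1$, $1\mapsto2$, $+\mapsto3$, $-\mapsto4$), and if both bases yield uniform outcome strings the search fails. If $n=O(\log D)$ (measurements in each of the two bases at each node of the shortest path), then the probability that the agent reaches the treasure in $D$ steps is close to $1$ (it tends to $1$ as $D\to\infty$).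
   Context: Anonymous graph: connected simple undirected graph with unlabelled nodes, edges at each node carrying distinct local port numbers. The agent is oblivious (no memory between rounds) and in each round can traverse at most one edge. A quantum pebble is a source placed at a node by an oracle that repeatedly emits qubits, all in the same quantum state, which is unknown to the agent; the agent can obtain arbitrarily many copies and perform projective single-qubit measurements on them. *)

(* Defs.v *)
From HB Require Import structures.
From mathcomp Require Import all_boot all_order all_algebra.
From mathcomp Require Import reals.
Set Implicit Arguments. Unset Strict Implicit. Unset Printing Implicit Defensive.
Import Order.TTheory GRing.Theory Num.Theory.
Local Open Scope ring_scope.

(* Ports 1,2,3,4 are represented by the ordinals 0,1,2,3 of 'I_4. *)

Section QPebble.
Variable R : realType.

(* Real qubit states as amplitude pairs (all states here have real amplitudes). *)
Definition qstate := (R * R)%type.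
Definition ket0 : qstate := (1, 0).
Definition ket1 : qstate := (0, 1).
Definition ketp : qstate := ((Num.sqrt 2)^-1, (Num.sqrt 2)^-1).
Definition ketm : qstate := ((Num.sqrt 2)^-1, - (Num.sqrt 2)^-1).
Definition inner (u v : qstate) : R := u.1 * v.1 + u.2 * v.2.

Definition psi (i : 'I_4) : qstate :=
  match val i with 0 => ket0 | 1 => ket1 | 2 => ketp | _ => ketm end.

Definition comp_vec (b : bool) : qstate := if b then ket1 else ket0.
Definition sign_vec (b : bool) : qstate := if b then ketm else ketp.

Definition born (e phi : qstate) : R := (inner e phi) ^+ 2.

Definition record_prob n (i : 'I_4) (r : n.-tuple bool * n.-tuple bool) : R :=
  (\prod_(b <- r.1) born (comp_vec b) (psi i)) *
  (\prod_(b <- r.2) born (sign_vec b) (psi i)).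

Definition uniform_outcomes (s : seq bool) : bool := all (pred1 (head false s)) s.

Definition port1 : 'I_4 := @Ordinal 4 0 isT.
Definition port2 : 'I_4 := @Ordinal 4 1 isT.
Definition port3 : 'I_4 := @Ordinal 4 2 isT.
Definition port4 : 'I_4 := @Ordinal 4 3 isT.

Definition decide n (r : n.-tuple bool * n.-tuple bool) : option 'I_4 :=
  let ux := uniform_outcomes r.1 in
  let uy := uniform_outcomes r.2 in
  if ux && ~~ uy then Some (if head false r.1 then port2 else port1)
  else if uy && ~~ ux then Some (if head false r.2 then port4 else port3)
  else None.

(* Probability that the agent reaches the treasure in D steps, given that the
   fixed shortest path s = v_0, ..., v_D = t leaves v_j by port (ports j).
   The sample space is the collection of all measurement records at the D
   nodes v_0..v_{D-1}, the records at distinct nodes being independent. The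
   treasure is reached within D steps iff the agent decides the correct port at
   every node of the path. *)
Definition success_prob (D n : nat) (ports : 'I_D -> 'I_4) : R :=
  \sum_(w : {ffun 'I_D -> n.-tuple bool * n.-tuple bool}
         | [forall j, decide (w j) == Some (ports j)])
     \prod_(j < D) record_prob (ports j) (w j).

End QPebble.

(* Main.v *)
Require Import Defs.
From HB Require Import structures.
From mathcomp Require Import all_boot all_order all_algebra.
From mathcomp Require Import reals.
From mathcomp Require Import lra zify.
Import Order.TTheory GRing.Theory Num.Theory.
Local Open Scope ring_scope.

Section Aux.
Variable R : realType.

Lemma sum_lb n (F : n.-tuple bool * n.-tuple bool -> R) (P : pred (n.-tuple bool * n.-tuple bool))
  (A B : n.-tuple bool -> R) (Q1 Q2 : pred (n.-tuple bool)) :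
  (forall r, 0 <= F r) -> (forall x y, F (x, y) = A x * B y) ->
  (forall x y, Q1 x -> Q2 y -> P (x, y)) ->
  (\sum_(x | Q1 x) A x) * (\sum_(y | Q2 y) B y) <= \sum_(r | P r) F r.
Proof.
move=> F0 FAB HP.
rewrite big_distrl /=.
under eq_bigr do rewrite big_distrr /=.
rewrite pair_big_dep /=.
rewrite [X in _ <= X]big_mkcond [X in X <= _]big_mkcond /=.
apply: ler_sum => -[x y] _ /=.
case: ifP => [/andP[h1 h2]|_]; first by rewrite HP // FAB.
by case: ifP.
Qed.

Lemma prod_const_seq (T : eqType) (s : seq T) (f : T -> R) (c : R) :
  {in s, forall b, f b = c} -> \prod_(b <- s) f b = c ^+ size s.
Proof.
elim: s => [|a s IH] Hf; first by rewrite big_nil expr0.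
rewrite big_cons IH ?Hf ?mem_head //= ?exprS // => b Hb.
by apply: Hf; rewrite inE Hb orbT.
Qed.

Lemma unif_card n : (#|[pred y : n.-tuple bool | uniform_outcomes y]| <= 2)%N.
Proof.
apply: (leq_trans (n := #|[set nseq_tuple n false; nseq_tuple n true]|)).
  apply: subset_leq_card; apply/subsetP => y; rewrite !inE /uniform_outcomes.
  move/all_pred1P; rewrite size_tuple => Hy.
  case: (head false y) Hy => Hy.
    by apply/orP; right; apply/eqP/val_inj; rewrite /= Hy.
  by apply/orP; left; apply/eqP/val_inj; rewrite /= Hy.
by rewrite cards2; case: (_ != _).
Qed.

Lemma sign_part n :
  1 - 2 * (2^-1) ^+ n <= \sum_(y : n.-tuple bool | ~~ uniform_outcomes y) ((2:R)^-1) ^+ n.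
Proof.
set K := ((2:R)^-1) ^+ n.
have tot : \sum_(y : n.-tuple bool) K = 1.
  rewrite sumr_const card_tuple card_bool -mulr_natr natrX /K -exprMn mulVf ?expr1n //.
  by rewrite pnatr_eq0.
have hu : \sum_(y : n.-tuple bool | uniform_outcomes y) K <= 2 * K.
  rewrite sumr_const -[K *+ _]mulr_natl ler_pM2r; last by rewrite /K exprn_gt0 // invr_gt0 ltr0n.
  rewrite ler_nat.
  exact: unif_card.
have e := @bigID R 0 +%R _ (index_enum _) (fun y : n.-tuple bool => uniform_outcomes y) predT (fun _ : n.-tuple bool => K).
rewrite /= in e.
rewrite tot in e.
lra.
Qed.


Definition sq : R := (Num.sqrt (2:R))^-1.
Lemma hs : sq ^+ 2 = 2^-1.
Proof. by rewrite /sq exprVn sqr_sqrtr // ler0n. Qed.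
Lemma hs' : sq * sq = 2^-1.
Proof. by rewrite -expr2 hs. Qed.

Lemma half1 : (2:R)^-1 + 2^-1 = 1.
Proof. lra. Qed.

Lemma rp_ge0 n i (r : n.-tuple bool * n.-tuple bool) : 0 <= @record_prob R n i r.
Proof.
by rewrite /record_prob mulr_ge0 // prodr_ge0 // => b _; exact: sqr_ge0.
Qed.

Lemma unif_nseq k b : uniform_outcomes (nseq k b).
Proof. by case: k => [|k] //; apply/all_pred1P; rewrite size_nseq. Qed.

Lemma node_lb m (i : 'I_4) :
  1 - 2 * (2^-1) ^+ m.+1 <= \sum_(r | decide r == Some i) @record_prob R m.+1 i r.
Proof.
set K := ((2:R)^-1) ^+ m.+1.
have [->|[->|[->|->]]] : i = port1 \/ i = port2 \/ i = port3 \/ i = port4.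
  case: i => [[|[|[|[|k]]]] Hi] //.
  - by left; apply: val_inj.
  - by right; left; apply: val_inj.
  - by right; right; left; apply: val_inj.
  - by right; right; right; apply: val_inj.
- have H := (@sum_lb _ (@record_prob R m.+1 port1) (fun r => decide r == Some port1) (fun x => \prod_(b <- x) born (comp_vec R b) (psi R port1))
     (fun y => \prod_(b <- y) born (sign_vec R b) (psi R port1))
     (fun x => x == nseq_tuple m.+1 false) (fun y => ~~ uniform_outcomes y)
     (@rp_ge0 _ _) (fun x y => erefl)).
  apply: (le_trans _ (H _)).
    rewrite big_pred1_eq /= (@prod_const_seq _ _ _ 1); last first.
      move=> b; rewrite (_ : false :: nseq m false = nseq m.+1 false) // mem_nseq => /andP[_ /eqP ->].
      by rewrite /born /inner /= mulr1 mulr0 addr0 expr1n.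
    rewrite expr1n mul1r.
    rewrite (eq_bigr (fun _ => K)); first exact: sign_part.
    move=> y _; rewrite (@prod_const_seq _ _ _ (2^-1)) ?size_tuple //.
    by case=> _; rewrite /born /inner /= -/sq mulr1 mulr0 addr0 ?sqrrN hs.
  move=> x y /eqP -> Hy; rewrite /decide /= (unif_nseq m.+1 false) (negbTE Hy) /=.
  by [].  
- have H2 := (@sum_lb _ (@record_prob R m.+1 port2) (fun r => decide r == Some port2) (fun x => \prod_(b <- x) born (comp_vec R b) (psi R port2))
     (fun y => \prod_(b <- y) born (sign_vec R b) (psi R port2))
     (fun x => x == nseq_tuple m.+1 true) (fun y => ~~ uniform_outcomes y)
     (@rp_ge0 _ _) (fun x y => erefl)).
  apply: (le_trans _ (H2 _)).
    rewrite big_pred1_eq /= (@prod_const_seq _ _ _ 1); last first.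
      move=> b; rewrite (_ : true :: nseq m true = nseq m.+1 true) // mem_nseq => /andP[_ /eqP ->].
      by rewrite /born /inner /= mulr1 mulr0 add0r expr1n.
    rewrite expr1n mul1r.
    rewrite (eq_bigr (fun _ => K)); first exact: sign_part.
    move=> y _; rewrite (@prod_const_seq _ _ _ (2^-1)) ?size_tuple //.
    by case=> _; rewrite /born /inner /= -/sq mulr1 mulr0 add0r ?sqrrN hs.
  move=> x y /eqP -> Hy; rewrite /decide /= (unif_nseq m.+1 true) (negbTE Hy) /=.
  by [].  
- have H3 := (@sum_lb _ (@record_prob R m.+1 port3) (fun r => decide r == Some port3) (fun x => \prod_(b <- x) born (comp_vec R b) (psi R port3))
     (fun y => \prod_(b <- y) born (sign_vec R b) (psi R port3))
     (fun x => ~~ uniform_outcomes x) (fun y => y == nseq_tuple m.+1 false)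
     (@rp_ge0 _ _) (fun x y => erefl)).
  apply: (le_trans _ (H3 _)).
    rewrite big_pred1_eq /= (@prod_const_seq _ _ _ 1); last first.
      move=> b; rewrite (_ : false :: nseq m false = nseq m.+1 false) // mem_nseq => /andP[_ /eqP ->].
      by rewrite /born /inner /= -/sq hs' half1 expr1n.
    rewrite expr1n mulr1.
    rewrite (eq_bigr (fun _ => K)); first exact: sign_part.
    move=> y _; rewrite (@prod_const_seq _ _ _ (2^-1)) ?size_tuple //.
    by case=> _; rewrite /born /inner /= -/sq ?mul1r ?mul0r ?addr0 ?add0r hs.
  move=> x y Hx /eqP ->; rewrite /decide /= (unif_nseq m.+1 false) (negbTE Hx) /=.
  by [].  
- have H4 := (@sum_lb _ (@record_prob R m.+1 port4) (fun r => decide r == Some port4) (fun x => \prod_(b <- x) born (comp_vec R b) (psi R port4))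
     (fun y => \prod_(b <- y) born (sign_vec R b) (psi R port4))
     (fun x => ~~ uniform_outcomes x) (fun y => y == nseq_tuple m.+1 true)
     (@rp_ge0 _ _) (fun x y => erefl)).
  apply: (le_trans _ (H4 _)).
    rewrite big_pred1_eq /= (@prod_const_seq _ _ _ 1); last first.
      move=> b; rewrite (_ : true :: nseq m true = nseq m.+1 true) // mem_nseq => /andP[_ /eqP ->].
      by rewrite /born /inner /= -/sq mulrNN hs' half1 expr1n.
    rewrite expr1n mulr1.
    rewrite (eq_bigr (fun _ => K)); first exact: sign_part.
    move=> y _; rewrite (@prod_const_seq _ _ _ (2^-1)) ?size_tuple //.
    by case=> _; rewrite /born /inner /= -/sq ?mul1r ?mul0r ?addr0 ?add0r ?sqrrN hs.
  move=> x y Hx /eqP ->; rewrite /decide /= (unif_nseq m.+1 true) (negbTE Hx) /=.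
  by [].  
Qed.

Lemma sp_eq D n (ports : 'I_D -> 'I_4) :
  @success_prob R D n ports =
  \prod_(j < D) \sum_(r : n.-tuple bool * n.-tuple bool | decide r == Some (ports j)) record_prob R (ports j) r.
Proof.
rewrite bigA_distr_big_dep /success_prob; apply: eq_bigl => w.
by apply/forallP/familyP => H j; have := H j.
Qed.

Lemma bern d (e : R) : 0 <= e <= 1 -> 1 - d%:R * e <= (1 - e) ^+ d.
Proof.
move=> /andP[e0 e1]; elim: d => [|d IH]; first by rewrite mul0r subr0 expr0.
rewrite exprS -addn1 natrD.
have hd : 0 <= d%:R * e * e :> R by rewrite !mulr_ge0.
have h1 : 0 <= (1 - e) * ((1 - e) ^+ d - (1 - d%:R * e)).
  by rewrite mulr_ge0 // subr_ge0.
nra.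
Qed.

Lemma sp_lb D m (ports : 'I_D -> 'I_4) :
  1 - D%:R * (2 * (2^-1) ^+ m.+1) <= @success_prob R D m.+1 ports.
Proof.
set K := ((2:R)^-1) ^+ m.+1.
have K0 : 0 <= K by rewrite /K exprn_ge0 // invr_ge0 ler0n.
have K1 : 2 * K <= 1.
  have h : (2:R)^-1 ^+ m <= 1 by rewrite exprn_ile1 // ?invr_ge0 ?ler0n // invf_le1 // ler1n.
  have h0 : 0 <= (2:R)^-1 ^+ m by rewrite exprn_ge0 // invr_ge0 ler0n.
  rewrite /K exprSr.
  have h2 : (2:R) * 2^-1 = 1 by rewrite mulfV // pnatr_eq0.
  nra.
apply: (le_trans (bern D (2 * K) _)); first by rewrite K1 mulr_ge0 ?ler0n.
rewrite sp_eq.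
have -> : (1 - 2 * K) ^+ D = \prod_(j < D) (1 - 2 * K).
  by rewrite prodr_const card_ord.
apply: ler_prod => j _; rewrite subr_ge0 K1 /=.
exact: node_lb.
Qed.

End Aux.

Theorem lemma4 (R : realType) :
  exists n : nat -> nat,
    (exists (C D1 : nat), forall D : nat, (D1 <= D)%N -> (n D <= C * trunc_log 2 D)%N) /\
    (forall eps : R, 0 < eps -> exists D0 : nat, forall D : nat, (D0 <= D)%N ->
       forall ports : 'I_D -> 'I_4, 1 - eps <= @success_prob R D (n D) ports).
Proof.
exists (fun D => ((trunc_log 2 D).*2).+2); split.
  exists 4%N, 2%N => D HD.
  have : (0 < trunc_log 2 D)%N by rewrite trunc_log_gt0.
  rewrite -addnn; lia.
move=> eps eps0.
exists (Num.truncn (2 / eps)).+1 => D HD ports.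
set tl := trunc_log 2 D.
apply: (le_trans _ (@sp_lb R D (tl.*2).+1 ports)).
set K := ((2:R)^-1) ^+ (tl.*2).+2.
set P := (2:R) ^+ (tl.*2).+2.
have KP : K * P = 1 by rewrite /K /P -exprMn mulVf ?expr1n // pnatr_eq0.
have K0 : 0 <= K by rewrite /K exprn_ge0 // invr_ge0 ler0n.
have hDD : (D * D)%:R <= P.
  rewrite /P -natrX ler_nat.
  have h := @trunc_log_ltn 2 D isT; rewrite -/tl in h.
  rewrite -addnn -addSn -addnS expnD.
  by apply: leq_mul; apply: ltnW.
have hD : 2 <= eps * D%:R.
  have h := truncnS_gt (2 / eps).
  have : (Num.truncn (2 / eps)).+1%:R <= D%:R :> R by rewrite ler_nat.
  move=> h'.
  have h2 : 2 / eps < D%:R by exact: lt_le_trans h h'.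
  by rewrite mulrC -ler_pdivrMr // ltW.
rewrite natrM in hDD.
have h1 : 0 <= (eps * D%:R - 2) * (D%:R * K).
  by apply: mulr_ge0; [rewrite subr_ge0 | rewrite mulr_ge0 ?ler0n].
have h2 : 0 <= (eps * K) * (P - D%:R * D%:R).
  by apply: mulr_ge0; [rewrite mulr_ge0 // ltW | rewrite subr_ge0].
have h3 : eps * K * P = eps by rewrite -mulrA KP mulr1.
nra.
Qed.
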